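(* Let $F$ be the unique series in $\mathbb{Q}[x,\bar x,y,\bar y][[t]]$ satisfying $(1-St)F=\bar x\bar y-\bar x t[x^0][y^<]F-\bar y t[y^0][x^<]F$. Let $F_1=[x^<][y^<]F$, $F_2=F-F_1$, and, writing $F_2=\sum c_{i,j,n}x^iy^jt^n$, let $F_2^D=\sum_{i\ge0}\sum_n c_{i,i,n}x^iy^it^n$ and $F_2^L=\sum_{i\ge0}\sum_{j\le i-1}\sum_n c_{i,j,n}x^iy^jt^n$. Then $$(1-St)\,F_2^L=t\,[\bar x]F_1+\bigl(tx+t\bar y-\tfrac12\bigr)F_2^D-t\bar x\,[x^0]F_2^L.$$
   Context: Notation: $\bar x=x^{-1}$, $\bar y=y^{-1}$, $S=x+y+\bar x+\bar y$; series in $\mathbb{Q}[x,\bar x,y,\bar y][[t]]$. For $G=\sum c_{i,j,n}x^iy^jt^n$: $[x^0]G=\sum_{j,n}c_{0,j,n}y^jt^n$, $[y^0]G=\sum_{i,n}c_{i,0,n}x^it^n$, $[\bar x]G=\sum_{j,n}c_{-1,j,n}y^jt^n$ (coefficient of $x^{-1}$); $[x^<]G$ (resp. $[y^<]G$) is the sum of terms with negative $x$-exponent (resp. $y$-exponent). *)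

(* Defs.v *)
From HB Require Import structures.
From mathcomp Require Import all_boot all_order all_algebra.
Set Implicit Arguments. Unset Strict Implicit. Unset Printing Implicit Defensive.
Import Order.TTheory GRing.Theory Num.Theory.
Local Open Scope ring_scope.

(* A series G in Q[x, xbar, y, ybar][[t]] is represented by its coefficient
   function: G i j n = coefficient of x^i y^j t^n. *)
Definition series := int -> int -> nat -> rat.

(* Membership in Q[x,xbar,y,ybar][[t]]: each t^n coefficient is a Laurent
   polynomial (finitely many nonzero (i,j)). *)
Definition is_series (G : series) : Prop :=
  forall n : nat, exists N : nat, forall i j : int,
    (N < absz i)%N \/ (N < absz j)%N -> G i j n = 0.

Definition sadd (G H : series) : series := fun i j n => G i j n + H i j n.
Definition ssub (G H : series) : series := fun i j n => G i j n - H i j n.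
Definition sscale (c : rat) (G : series) : series := fun i j n => c * G i j n.

Definition smono (a b : int) (c : nat) (G : series) : series :=
  fun i j n => if (c <= n)%N then G (i - a) (j - b) (n - c)%N else 0.

Definition mono (a b : int) (c : nat) : series :=
  fun i j n => if (i == a) && (j == b) && (n == c) then 1 else 0.

(* multiplication by S t, S = x + y + xbar + ybar *)
Definition mulSt (G : series) : series :=
  sadd (sadd (smono 1 0 1 G) (smono 0 1 1 G))
       (sadd (smono (-1) 0 1 G) (smono 0 (-1) 1 G)).

Definition oneMSt (G : series) : series := ssub G (mulSt G).

Definition cx0 (G : series) : series := fun i j n => if i == 0 then G 0 j n else 0.
Definition cy0 (G : series) : series := fun i j n => if j == 0 then G i 0 n else 0.
Definition cxbar (G : series) : series := fun i j n => if i == 0 then G (-1) j n else 0.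
Definition xneg (G : series) : series := fun i j n => if i < 0 then G i j n else 0.
Definition yneg (G : series) : series := fun i j n => if j < 0 then G i j n else 0.

Definition F_equation (F : series) : Prop :=
  oneMSt F = ssub (ssub (mono (-1) (-1) 0) (smono (-1) 0 1 (cx0 (yneg F))))
                  (smono 0 (-1) 1 (cy0 (xneg F))).

Definition F1_of (F : series) : series := xneg (yneg F).
Definition F2_of (F : series) : series := ssub F (F1_of F).
Definition diag_part (G : series) : series :=
  fun i j n => if (0 <= i) && (j == i) then G i j n else 0.
Definition lower_part (G : series) : series :=
  fun i j n => if (0 <= i) && (j <= i - 1) then G i j n else 0.

(* Main.v *)
Require Import Defs.
From mathcomp Require Import all_boot all_order all_algebra.
From mathcomp Require Import zify lra.
From Stdlib Require Import FunctionalExtensionality.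
Set Implicit Arguments.
Import Order.TTheory GRing.Theory Num.Theory.
Local Open Scope ring_scope.

Lemma Frec (F : series) : F_equation F -> forall (i j : int) (n : nat),
  F i j n.+1 = F (i-1) j n + F i (j-1) n + F (i+1) j n + F i (j+1) n
    - (if i+1 == 0 then (if j<0 then F 0 j n else 0) else 0)
    - (if j+1 == 0 then (if i<0 then F i 0 n else 0) else 0).
Proof.
move=> Feq i j n; move: (congr1 (fun G => G i j n.+1) Feq).
rewrite /oneMSt /mulSt /ssub /sadd /smono /mono /cx0 /cy0 /xneg /yneg /=.
rewrite ?subr0 ?opprK subn1 /= andbF.
move=> H.
match goal with H : _ = _ - ?a - ?b |- _ = _ - ?c - ?d =>
  change a with c in H; change b with d in H end.
lra.
Qed.

Lemma F0 (F : series) : F_equation F -> forall (i j : int),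
  F i j 0 = if (i == -1) && (j == -1) then 1 else 0.
Proof.
move=> Feq i j; move: (congr1 (fun G => G i j 0%N) Feq).
rewrite /oneMSt /mulSt /ssub /sadd /smono /mono /cx0 /cy0 /xneg /yneg /= andbT.
rewrite ?addr0 ?subr0 => ->.
by [].
Qed.

Lemma perm6 (a b c d e f : rat) : a + b + c + d - e - f = b + a + d + c - f - e.
Proof. lra. Qed.

Lemma Fsym (F : series) : F_equation F -> forall (n : nat) (i j : int),
  F i j n = F j i n.
Proof.
move=> Feq; elim=> [|n IH] i j.
  by rewrite !(F0 Feq) andbC.
rewrite !(Frec Feq).
rewrite [F (i-1) j n]IH [F i (j-1) n]IH [F (i+1) j n]IH [F i (j+1) n]IH.
rewrite [F 0 j n]IH [F i 0 n]IH.
apply: perm6.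
Qed.

Lemma F2L_E (F : series) i j n : lower_part (F2_of F) i j n =
  if (0 <= i) && (j <= i - 1) then F i j n else 0.
Proof.
rewrite /lower_part /F2_of /F1_of /ssub /xneg /yneg.
case: ifP => // /andP[H1 _]; by rewrite ltNge H1 /= subr0.
Qed.

Lemma F2D_E (F : series) i j n : diag_part (F2_of F) i j n =
  if (0 <= i) && (j == i) then F i j n else 0.
Proof.
rewrite /diag_part /F2_of /F1_of /ssub /xneg /yneg.
case: ifP => // /andP[H1 _]; by rewrite ltNge H1 /= subr0.
Qed.

Lemma F1_E (F : series) i j n : F1_of F i j n =
  if (i < 0) && (j < 0) then F i j n else 0.
Proof. by rewrite /F1_of /xneg /yneg; case: (i < 0); case: (j < 0). Qed.

Ltac dec := repeat match goal with |- context [if ?c then _ else _] =>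
  let H := fresh in
  first [assert (H : c = true) by lia | assert (H : c = false) by lia];
  rewrite H; clear H end; rewrite ?if_same.

Ltac norm := rewrite ?subr0 ?opprK ?sub0r ?add0r ?addr0 ?addNr ?subrK ?addrK.

Theorem mainTheorem10 (F : series) :
  is_series F -> F_equation F ->
  let F1 := F1_of F in
  let F2 := F2_of F in
  let F2D := diag_part F2 in
  let F2L := lower_part F2 in
  oneMSt F2L =
    ssub (sadd (smono 0 0 1 (cxbar F1))
               (ssub (sadd (smono 1 0 1 F2D) (smono 0 (-1) 1 F2D))
                     (sscale (1 / 2) F2D)))
         (smono (-1) 0 1 (cx0 F2L)).
Proof.
move=> _ Feq F1 F2 F2D F2L.
rewrite /F2L /F2D /F1 /F2.
extensionality i; extensionality j; extensionality n.
rewrite /oneMSt /mulSt /ssub /sadd /smono /sscale /cxbar /cx0.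
rewrite !F2L_E !F2D_E !F1_E.
case: n => [|m].
  rewrite /= (F0 Feq); repeat (case: ifP => ?); (lra || (exfalso; lia)).
rewrite /= ?subn1 /=; norm.
have : (i <= -2) \/ (i = -1) \/ (i = 0 /\ j <= -2) \/ (i = 0 /\ j = -1)
  \/ (0 < i /\ j <= i - 2) \/ (0 < i /\ j = i - 1) \/ (0 <= i /\ j = i)
  \/ (0 <= i /\ i + 1 <= j) by lia.
case=> [H|[H|[[H1 H2]|[[H1 H2]|[[H1 H2]|[[H1 H2]|[[H1 H2]|[H1 H2]]]]]]]];
  try subst i; try subst j; dec; rewrite ?(Frec Feq); dec; norm;
  try rewrite (Fsym Feq m (i-1) i) (Fsym Feq m i (i+1));
  try rewrite (Fsym Feq m (j-1) j) (Fsym Feq m j (j+1));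
  repeat (case: ifP => ?); first [lra | exfalso; lia].
Qed.
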